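(* Let $p \in (0,\frac{1}{2})$ be a constant. No (possibly randomized) sorting algorithm can achieve, on a random instance with $n$ elements, maximum dislocation $o(\log n)$ with high probability (i.e., with probability at least $1 - \frac{1}{n}$).
   Context: Setting: the elements are $S=\{1,\dots,n\}$ with the natural order. A random instance consists of an input permutation of $S$ chosen uniformly at random together with comparison outcomes: for each pair $i<j$ independently, the comparison reports the wrong order with probability exactly $p$ and the correct order otherwise; outcomes are persistent (repeated comparisons of the same pair return the same outcome). The algorithm accesses the elements only via these comparisons and outputs a permutation of $S$. For a sequence and element $x$, the dislocation of $x$ is the absolute difference between its position and its true rank; the maximum dislocation is the maximum over all elements. *)

(* Defs.v *)
From HB Require Import structures.
From mathcomp Require Import all_boot all_order all_algebra all_fingroup.
From mathcomp Require Import all_classical all_reals all_analysis.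

Set Implicit Arguments. Unset Strict Implicit. Unset Printing Implicit Defensive.
Import Order.TTheory GRing.Theory Num.Theory.
Local Open Scope ring_scope.

(* Elements S = {1,...,n} are represented by 'I_n = {0,...,n-1}, with the
   natural order; the true rank of element x is x itself (shifted by one,
   which does not affect dislocations). *)

Definition upair (n : nat) := {x : 'I_n * 'I_n | (x.1 < x.2)%N}.

(* Error pattern: e u = true iff the comparison of the pair u reports the
   wrong order.  Persistent by construction (one bit per pair). *)
Definition errors (n : nat) := {ffun upair n -> bool}.

Definition errbit n (e : errors n) (x y : 'I_n) : bool :=
  if @insub _ (fun z : 'I_n * 'I_n => (z.1 < z.2)%N) (upair n) (x, y)
  is Some u then e u else false.

(* Input: the permutation pi; input position a holds element pi a.
   report pi e a b = the comparison of the elements at input positions a, b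
   reports "element at a < element at b". *)
Definition report n (pi : {perm 'I_n}) (e : errors n) (a b : 'I_n) : bool :=
  let x := pi a in let y := pi b in
  if (x < y)%N then ~~ errbit e x y
  else if (y < x)%N then errbit e y x
  else false.

(* Everything the algorithm can learn: all comparison outcomes between
   input positions. *)
Definition tourn (n : nat) := {ffun 'I_n * 'I_n -> bool}.

Definition observed n (pi : {perm 'I_n}) (e : errors n) : tourn n :=
  [ffun ab : 'I_n * 'I_n => report pi e ab.1 ab.2].

(* A deterministic algorithm: its output depends on the instance only through
   comparison outcomes; it outputs an ordering of the input positions
   (output position k receives the element at input position tau k). *)
Definition detalg (n : nat) := {ffun tourn n -> {perm 'I_n}}.

(* A randomized algorithm: a probability distribution over deterministic ones. *)
Definition is_distr (T : finType) (R : realType) (mu : {ffun T -> R}) : Prop :=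
  (forall t, 0 <= mu t) /\ \sum_(t : T) mu t = 1.

Definition distn (i j : nat) : nat := maxn (i - j) (j - i).

Definition maxdisl n (pi : {perm 'I_n}) (tau : {perm 'I_n}) : nat :=
  \max_(k : 'I_n) distn k (pi (tau k)).

Definition errweight (R : realType) (p : R) n (e : errors n) : R :=
  \prod_(u : upair n) (if e u then p else 1 - p).

Definition success (R : realType) (p : R) n (mu : {ffun detalg n -> R}) (t : R) : R :=
  \sum_(A : detalg n) mu A *
    \sum_(pi : {perm 'I_n}) \sum_(e : errors n)
      ((n`!)%:R^-1 * errweight p e *
       (if ((maxdisl pi (A (observed pi e)))%:R <= t) then 1 else 0)).

Definition little_o_log (R : realType) (f : nat -> R) : Prop :=
  forall eps : R, 0 < eps ->
    exists N : nat, forall n : nat, (N <= n)%N -> `|f n| <= eps * ln (n%:R : R).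

(* Main.v *)
From HB Require Import structures.
From mathcomp Require Import all_boot all_order all_algebra all_fingroup.
From mathcomp Require Import all_classical all_reals all_analysis.
From mathcomp Require Import zify ring lra.
Require Import Defs.
Import Order.TTheory GRing.Theory Num.Theory.
Set Implicit Arguments. Unset Strict Implicit. Unset Printing Implicit Defensive.
Local Open Scope ring_scope.



Definition rep n (e : errors n) (u v : 'I_n) : bool :=
  if (u < v)%N then ~~ errbit e u v else if (v < u)%N then errbit e v u else false.

Lemma reportE n (pi : {perm 'I_n}) e a b : report pi e a b = rep e (pi a) (pi b).
Proof. by []. Qed.

Lemma errbitE n (e : errors n) (u v : 'I_n) (h : (u < v)%N) :
  errbit e u v = e (exist _ (u, v) h).
Proof.
rewrite /errbit insubT; congr (e _); exact: val_inj.
Qed.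

Lemma errbit_val n (e : errors n) (u : upair n) : errbit e (val u).1 (val u).2 = e u.
Proof. case: u => [[a b] h] /=; by rewrite (errbitE e h). Qed.

Lemma rep_antisym n (e : errors n) u v : u != v -> rep e v u = ~~ rep e u v.
Proof.
move=> neq; rewrite /rep; case: (ltngtP u v) => h //; first by rewrite negbK.
by move/val_inj: h => h; rewrite h eqxx in neq.
Qed.

Definition flipE n (s : {perm 'I_n}) (e : errors n) : errors n :=
  [ffun u : upair n => ~~ rep e (s (val u).1) (s (val u).2)].

Lemma rep_flip n (s : {perm 'I_n}) (inv : involutive s) e u v :
  rep (flipE s e) (s u) (s v) = rep e u v.
Proof.
rewrite {1}/rep; case: (ltngtP (s u) (s v)) => h.
- by rewrite (errbitE _ h) ffunE /= !inv negbK.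
- rewrite (errbitE _ h) ffunE /= !inv rep_antisym ?negbK //.
  apply/eqP => Euv; move: h; by rewrite Euv ltnn.
- move/val_inj/perm_inj: h => ->; by rewrite /rep ltnn.
Qed.

Lemma observed_flip n (pi s : {perm 'I_n}) (inv : involutive s) e :
  observed (pi * s) (flipE s e) = observed pi e.
Proof.
apply/ffunP => -[a b]; by rewrite !ffunE /= !reportE !permM rep_flip.
Qed.

Lemma flipE_inv n (s : {perm 'I_n}) (inv : involutive s) e :
  flipE s (flipE s e) = e.
Proof.
apply/ffunP => u; rewrite ffunE rep_flip //.
case: u => [[a b] h] /=; by rewrite /rep h (errbitE _ h) negbK.
Qed.

Definition sortp n (a b : 'I_n) : 'I_n * 'I_n := if (a < b)%N then (a, b) else (b, a).

Definition hU n (s : {perm 'I_n}) (u : upair n) : upair n :=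
  insubd u (sortp (s (val u).1) (s (val u).2)).

Lemma hU_val n (s : {perm 'I_n}) u :
  val (hU s u) = sortp (s (val u).1) (s (val u).2).
Proof.
rewrite /hU insubdK // /sortp unfold_in.
case: u => [[a b] h] /=.
case: ifP => E //=; move: E; case: ltngtP => // E _.
move/val_inj/perm_inj: E => E; by rewrite E ltnn in h.
Qed.

Lemma hU_inv n (s : {perm 'I_n}) (inv : involutive s) : involutive (hU s).
Proof.
move=> u; apply: val_inj; rewrite !hU_val.
case: u => [[a b] h] /=; rewrite /sortp.
move: h => /= h.
case: (ltngtP (s a) (s b)) => E1 /=; rewrite !inv ?h //.
- by rewrite ltnNge (ltnW h).
- move/val_inj/perm_inj: E1 => E; by rewrite E ltnn in h.
Qed.

Lemma flipE_hU n (s : {perm 'I_n}) (inv : involutive s) e u :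
  flipE s e (hU s u) = if (s (val u).1 < s (val u).2)%N then e u else ~~ e u.
Proof.
rewrite ffunE hU_val; case: u => [[a b] h] /=; rewrite /sortp.
case: ifP => E /=; rewrite !inv /rep.
- by rewrite h negbK (errbitE _ h).
- by rewrite ltnNge (ltnW h) /= h (errbitE _ h).
Qed.



Lemma bad_char n (x y : 'I_n) (hx : val x = 0%N) (hxy : (x < y)%N) (u : upair n) :
  ~~ (tperm x y (val u).1 < tperm x y (val u).2)%N ->
  ((val u).2 <= y)%N && (((val u).1 == x) || ((val u).2 == y)).
Proof.
case: u => [[a b] h] /=; move: h => /= h.
case: tpermP => [Ea|Ea|na1 na2]; case: tpermP => [Eb|Eb|nb1 nb2];
  rewrite ?Ea ?Eb ?eqxx ?orbT ?andbT //=; subst => H; lia.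
Qed.

Lemma card_bad n (x y : 'I_n) (hx : val x = 0%N) (hxy : (x < y)%N) :
  (#|[pred u : upair n | ~~ (tperm x y (val u).1 < tperm x y (val u).2)%N]| <= (val y).+1 * 2)%N.
Proof.
pose f (u : upair n) : 'I_(val y).+1 * bool :=
  (inord (if (val u).1 == x then val (val u).2 else val (val u).1), (val u).1 == x).
have -> : ((val y).+1 * 2 = #|{: 'I_(val y).+1 * bool}|)%N by rewrite card_prod card_ord card_bool.
apply: (@leq_card_in _ _ f) => u v; rewrite !inE => /(bad_char hx hxy) Hu /(bad_char hx hxy) Hv.
rewrite /f => -[E1 E2].
case: u Hu E1 E2 => [[a b] h]; case: v Hv => [[c d] h'] /= Hu Hv E1 E2.
apply: val_inj => /=.
move: E2; case: eqP => Ea; case: eqP => Ec //= _.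
- subst a c; move: E1 Hu Hv; rewrite eqxx => E1 /andP [Hu _] /andP [Hv _].
  move/(congr1 (@nat_of_ord _)): E1; rewrite !inordK; try lia.
  move=> Ebd; congr pair; exact: val_inj.
- move/andP: Hu => [Hu1 /orP [/eqP // | /eqP Ed]].
  move/andP: Hv => [Hv1 /orP [/eqP // | /eqP Eb]].
  subst b d; move: h h' E1 => /= h h'; rewrite (introF eqP Ea) (introF eqP Ec).
  move/(congr1 (@nat_of_ord _)); rewrite !inordK; try lia.
  move=> Eac; have -> : a = c by exact: val_inj.
  by [].
Qed.

Lemma weight_flip (R : realType) (p : R) (hp0 : 0 < p) (hp1 : p < 2^-1) n
  (x y : 'I_n) (hx : val x = 0%N) (hxy : (x < y)%N) (e : errors n) :
  (p / (1 - p)) ^+ ((val y).+1 * 2) * errweight p e <=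
  errweight p (flipE (tperm x y) e).
Proof.
set s := tperm x y.
have inv : involutive s by move=> z; rewrite /s tpermK.
have p1 : 0 < 1 - p by lra.
have q0 : 0 <= p / (1 - p) by rewrite divr_ge0 // ltW.
have q1 : p / (1 - p) <= 1.
  rewrite ler_pdivrMr // mul1r; lra.
rewrite /errweight [X in _ <= X](reindex_inj (inv_inj (hU_inv inv))) /=.
under [X in _ <= X]eq_bigr => u _ do rewrite flipE_hU //.
apply: (@le_trans _ _ (\prod_(u : upair n)
   ((if (s (val u).1 < s (val u).2)%N then 1 else p / (1 - p)) *
    (if e u then p else 1 - p)))).
  rewrite big_split /= ler_wpM2r //; first by apply: prodr_ge0 => u _; case: ifP; rewrite ?ltW.
  rewrite (eq_bigr (fun u : upair n => if ~~ (s (val u).1 < s (val u).2)%N then p / (1 - p) else 1));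
    last by move=> u _; case: ifP.
  rewrite -big_mkcond /= prodr_const.
  apply: ler_wiXn2l => //; exact: card_bad.
have qp : p / (1 - p) * (1 - p) = p by rewrite divfK // gt_eqF.
apply: ler_prod => u _; apply/andP; split.
  apply: mulr_ge0; first by case: ifP.
  by case: (e u); rewrite ltW.
case: ifP => _; first by rewrite mul1r.
case: (e u); last by rewrite qp.
apply: (@le_trans _ _ (1 * p)); first by rewrite ler_wpM2r // ltW.
rewrite mul1r; lra.
Qed.



Lemma pairing (R : realType) (T : finType) (W b : T -> R) (phi : T -> T) (r : R) :
  injective phi -> (forall i, 0 <= W i) -> \sum_i W i = 1 -> (forall i, 0 <= b i) ->
  (forall i, 1 <= b i + b (phi i)) -> (forall i, r * W i <= W (phi i)) -> 0 <= r ->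
  r <= (1 + r) * \sum_i (W i * b i).
Proof.
move=> phiI W0 W1 b0 b1 Wr r0.
have H1 : \sum_i (W i * b i) = \sum_i (W (phi i) * b (phi i)) by rewrite (reindex_inj phiI).
have H2 : r * \sum_i (W i * b (phi i)) <= \sum_i (W i * b i).
  rewrite H1 mulr_sumr; apply: ler_sum => i _; rewrite mulrA ler_wpM2r //.
have H3 : r <= r * \sum_i (W i * b i) + r * \sum_i (W i * b (phi i)).
  rewrite -mulrDr -big_split /=.
  rewrite -{1}(mulr1 r) -W1 ler_wpM2l //; apply: ler_sum => i _.
  by rewrite -mulrDr -{1}(mulr1 (W i)) ler_wpM2l.
lra.
Qed.

Lemma disl_sum n (pi tau : {perm 'I_n}) (x y : 'I_n) (hx : val x = 0%N) :
  (val y <= maxdisl pi tau + maxdisl (pi * tperm x y) tau)%N.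
Proof.
pose k0 := (tau^-1 (pi^-1 x))%g.
have E1 : pi (tau k0) = x by rewrite /k0 !permKV.
have E2 : (pi * tperm x y)%g (tau k0) = y by rewrite permM E1 tpermL.
have L1 := @leq_bigmax _ (fun k : 'I_n => distn k (pi (tau k))) k0.
have L2 := @leq_bigmax _ (fun k : 'I_n => distn k ((pi * tperm x y)%g (tau k))) k0.
move: L1 L2; rewrite /= E1 E2 /maxdisl /distn => L1 L2.
have hx' : nat_of_ord x = 0%N := hx.
apply: (leq_trans _ (leq_add L1 L2)); lia.
Qed.

Lemma errweight_sum (R : realType) (p : R) n : \sum_(e : errors n) errweight p e = 1.
Proof.
rewrite /errweight.
have := bigA_distr_bigA (fun (u : upair n) (b : bool) => if b then p else 1 - p).
move=> <-; apply: big1 => u _; rewrite big_bool /=; lra.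
Qed.

Lemma alg_bound (R : realType) (p : R) (hp0 : 0 < p) (hp1 : p < 2^-1) n
  (x y : 'I_n) (hx : val x = 0%N) (hxy : (x < y)%N) (t : R)
  (ht : 2 * t < (val y)%:R) (A : detalg n) :
  (p / (1 - p)) ^+ ((val y).+1 * 2) <=
  (1 + (p / (1 - p)) ^+ ((val y).+1 * 2)) *
  (1 - \sum_(pi : {perm 'I_n}) \sum_(e : errors n)
      ((n`!)%:R^-1 * errweight p e *
       (if ((maxdisl pi (A (observed pi e)))%:R <= t) then 1 else 0))).
Proof.
set r := (p / (1 - p)) ^+ _.
pose s := tperm x y.
have inv : involutive s by move=> z; rewrite /s tpermK.
pose T := ({perm 'I_n} * errors n)%type.
pose W (I : T) := (n`!)%:R^-1 * errweight p I.2.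
pose g (I : T) : R := if ((maxdisl I.1 (A (observed I.1 I.2)))%:R <= t) then 1 else 0.
pose b (I : T) := 1 - g I.
pose phi (I : T) : T := ((I.1 * s)%g, flipE s I.2).
have p1 : 0 < 1 - p by lra.
have ew0 e : 0 <= errweight p e.
  by apply: prodr_ge0 => u _; case: ifP; rewrite ltW.
have nf0 : (n`!)%:R != 0 :> R by rewrite pnatr_eq0 -lt0n fact_gt0.
have Wsum : \sum_(I : T) W I = 1.
  rewrite -(pair_bigA _ (fun pi e => W (pi, e))) /=.
  under eq_bigr => pi _ do rewrite /W /= -mulr_sumr errweight_sum mulr1.
  rewrite sumr_const card_Sn -[_ *+ _]mulr_natr; exact: mulVf.
have -> : 1 - \sum_(pi : {perm 'I_n}) \sum_(e : errors n)
      ((n`!)%:R^-1 * errweight p e *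
       (if ((maxdisl pi (A (observed pi e)))%:R <= t) then 1 else 0))
    = \sum_(I : T) (W I * b I).
  rewrite (pair_bigA _ (fun pi e => (n`!)%:R^-1 * errweight p e *
       (if ((maxdisl pi (A (observed pi e)))%:R <= t) then 1 else 0))) /=.
  rewrite -{1}Wsum -sumrB; apply: eq_bigr => I _; by rewrite /b mulrBr mulr1.
apply: pairing.
- apply: (@can_inj _ _ phi phi) => -[pi e]; rewrite /phi /= flipE_inv //; congr pair.
  by apply/permP => z; rewrite !permM inv.
- move=> I; apply: mulr_ge0 => //; by rewrite invr_ge0 ler0n.
- exact: Wsum.
- by move=> I; rewrite /b /g; case: ifP; rewrite subr_ge0 ?ler01.
- case=> pi e; rewrite /b /g /phi /= observed_flip //.
  have := disl_sum pi (A (observed pi e)) y hx.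
  set m1 := maxdisl _ _; set m2 := maxdisl _ _ => Hm.
  case: ifP => H1; case: ifP => H2; try lra.
  have : (val y)%:R <= (m1 + m2)%:R :> R by rewrite ler_nat.
  rewrite natrD; lra.
- case=> pi e; rewrite /W /phi /= mulrCA ler_wpM2l ?invr_ge0 ?ler0n //.
  exact: weight_flip.
- by rewrite /r exprn_ge0 // divr_ge0 // ltW.
Qed.



Lemma aux (R : realType) (m r S : R) : 0 <= m -> r <= (1 + r) * (1 - S) ->
  r * m <= (1 + r) * (m - m * S).
Proof.
move=> m0 H; rewrite -{2}(mulr1 m) -mulrBr mulrCA [r * m]mulrC ler_wpM2l //.
Qed.

Lemma fin (R : realType) (r : R) : 4 <= 1 + r -> r <= 1 -> False.
Proof. move=> H1 H2; lra. Qed.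

Lemma hk (k : nat) : (1 <= k)%N -> (k.+1 * 2 <= 4 * k)%N.
Proof. lia. Qed.

Unset Implicit Arguments.

Theorem theorem6p2 (R : realType) (p : R) (hp0 : 0 < p) (hp1 : p < 2^-1) :
  ~ exists (mu : forall n : nat, {ffun detalg n -> R}) (f : nat -> R),
      (forall n, is_distr (mu n)) /\ little_o_log f /\
      exists N : nat, forall n : nat, (N <= n)%N ->
        1 - (n%:R)^-1 <= success p (mu n) (f n).
Proof.
move=> [mu [f [Hmu [Ho [N HN]]]]].
have p1 : 0 < 1 - p by lra.
set q := p / (1 - p).
have q0 : 0 < q by rewrite divr_gt0.
have q1 : q <= 1 by rewrite /q ler_pdivrMr // mul1r; lra.
have q40 : 0 < q ^+ 4 by rewrite exprn_gt0.
pose a := (Num.Def.archi_bound (4 / q ^+ 4)).+2.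
have a4 : 4 <= a%:R * q ^+ 4.
  have := @archi_boundP R (4 / q ^+ 4) (ltW (divr_gt0 (ltr0n _ 4) q40)).
  move=> H; rewrite -ler_pdivrMr //; apply: (le_trans (ltW H)).
  rewrite ler_nat /a; lia.
have a1 : 1 < a%:R :> R by rewrite /a ltr1n.
pose eps := (4 * ln (a%:R : R))^-1.
have lna : 0 < ln (a%:R : R) by exact: ln_gt0.
have eps0 : 0 < eps by rewrite invr_gt0 mulr_gt0.
have [N2 HN2] := Ho eps eps0.
pose k := maxn (maxn N N2) 1.
pose n := (a ^ k)%N.
have kn : (k < n)%N by rewrite /n ltn_expl // /a.
have k1 : (1 <= k)%N by rewrite /k leq_maxr.
have Nn : (N <= n)%N by apply: leq_trans (ltnW kn); rewrite /k; lia.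
have N2n : (N2 <= n)%N by apply: leq_trans (ltnW kn); rewrite /k; lia.
have n0 : (0 < n)%N by lia.
pose x : 'I_n := Ordinal n0.
pose y : 'I_n := Ordinal kn.
have hx : val x = 0%N by [].
have hxy : (x < y)%N by [].
set t := f n.
have ht : 2 * t < (val y)%:R.
  have H := HN2 n N2n.
  have : t <= eps * ln (n%:R) by apply: le_trans (ler_norm _) H.
  rewrite /n natrX lnXn ?ltr0n // /eps => H2.
  have E : (4 * ln (a%:R : R))^-1 * (ln (a%:R : R) *+ k) = k%:R / 4.
    by rewrite -mulr_natr; field; rewrite gt_eqF.
  rewrite E in H2; rewrite /=.
  have : 1 <= k%:R :> R by rewrite ler1n.
  lra.
set r := q ^+ ((val y).+1 * 2).
have r0 : 0 <= r by rewrite exprn_ge0 // ltW.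
have r1 : r <= 1 by rewrite exprn_ile1 // ltW.
have key : r <= (1 + r) * (1 - success p (mu n) t).
  have [mu0 mu1] := Hmu n.
  rewrite /success -[X in _ * (X - _)]mu1 -sumrB mulr_sumr.
  rewrite -[X in X <= _](mulr1 r) -[X in r * X]mu1 mulr_sumr; apply: ler_sum => A _.
  have HA := alg_bound hp0 hp1 hx hxy ht A.
  exact: (aux (mu0 A) HA).
have Hs := HN n Nn.
have nR : 0 < n%:R :> R by rewrite ltr0n.
have H1 : r <= (1 + r) * (n%:R)^-1.
  apply: (le_trans key); rewrite ler_wpM2l //; [lra | lra].
have H2 : r * n%:R <= 1 + r.
  by rewrite -ler_pdivlMr // mulrC.
have rn : 4 <= r * n%:R.
  rewrite /n natrX.
  have Hk : ((val y).+1 * 2 <= 4 * k)%N := hk k1.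
  apply: (le_trans _ (ler_wpM2r (exprn_ge0 k (ler0n _ _)) (ler_wiXn2l (ltW q0) q1 Hk))).
  rewrite exprM -exprMn mulrC.
  apply: (le_trans a4); apply: ler_eXnr => //.
  apply: le_trans a4; by rewrite ler1n.
have H3 : 4 <= 1 + r := le_trans rn H2.
exact: (fin H3 r1).
Qed.
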